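(* Consider the normalised two-player, two-market Cournot game with per-period utility $u(x,a)=-2x(x+a)$ for a player playing $x$ against an opponent playing $a$. Let player 2's initial strategy be $a_0\in[-1,1]$. The players update alternately by myopic best response (a player facing opponent strategy $a$ switches to $-a/2$): at time $t=0$ player 1 updates, at $t=1$ player 2 updates, at $t=2$ player 1 updates, and so on. Let $u_t$ denote player 1's one-period utility at time $t$, evaluated at both players' strategies after the update at time $t$, and let $$g=u(-a_0/2,a_0)-u(-a_0,a_0)\ \ (\ge 0)$$ be the utility gained at the first move by the myopic best response relative to the equilibrium-mimicking response $-a_0$ (which yields utility $0$). Then $$\sum_{t=0}^{\infty}u_t=\frac{8g}{15},$$ which is strictly positive whenever $a_0\neq 0$.
   Context: Two players each have one unit of a homogeneous good (zero production and transportation cost) to split between two markets with inverse-linear demand. Strategies are normalised to numbers in $[-1,1]$ with $0$ the unique Cournot equilibrium split, and the normalised one-period utility (relative to the equilibrium utility, which is normalised to $0$) of a player playing $x$ against an opponent playing $a$ is $u(x,a)=-2x(x+a)$. An equilibrium-mimicking strategy profile is one in which every market receives the same total supply as it would in equilibrium; against opponent strategy $a_0$ this corresponds to playing $-a_0$, giving utility $0$. The myopic best response to $a$ is the maximiser of $u(\cdot,a)$, namely $-a/2$. *)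

(* Defs.v *)
From Stdlib Require Import Reals.
From Coquelicot Require Import Coquelicot.
Open Scope R_scope.

Definition u (x a : R) : R := -2 * x * (x + a).

(* Myopic best response to opponent strategy a (the maximiser of u(.,a)). *)
Definition best_response (a : R) : R := - a / 2.

(* Strategy profile (player 1's strategy, player 2's strategy) AFTER the
   update at time t, starting from the initial profile (x_init, a0). *)
Fixpoint profile (x_init a0 : R) (t : nat) : R * R :=
  match t with
  | O => (best_response a0, a0)
  | S t' =>
      let p := profile x_init a0 t' in
      if Nat.even t
      then (best_response (snd p), snd p)
      else (fst p, best_response (fst p))
  end.

Definition u1 (x_init a0 : R) (t : nat) : R :=
  let p := profile x_init a0 t in u (fst p) (snd p).

Definition gain (a0 : R) : R := u (best_response a0) a0 - u (- a0) a0.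

(* Main.v *)
Require Import Defs.
From Stdlib Require Import Reals Lra Lia.
From Coquelicot Require Import Coquelicot.
Open Scope R_scope.

Lemma ev2 k : Nat.even (2 * k) = true.
Proof. rewrite Nat.even_mul. reflexivity. Qed.
Lemma ev2S k : Nat.even (S (2 * k)) = false.
Proof. rewrite Nat.even_succ, Nat.odd_mul. reflexivity. Qed.

Lemma profS x a t : profile x a (S t) =
  if Nat.even (S t) then (best_response (snd (profile x a t)), snd (profile x a t))
  else (fst (profile x a t), best_response (fst (profile x a t))).
Proof. reflexivity. Qed.

Lemma prof_closed x a k :
  profile x a (2 * k) = (- a / 2 * (/4) ^ k, a * (/4) ^ k) /\
  profile x a (S (2 * k)) = (- a / 2 * (/4) ^ k, a / 4 * (/4) ^ k).
Proof.
  induction k as [|k [IH1 IH2]].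
  - simpl. unfold best_response. split; f_equal; field.
  - assert (E : (2 * S k = S (S (2 * k)))%nat) by lia.
    assert (H1 : profile x a (2 * S k) = (- a / 2 * (/4) ^ S k, a * (/4) ^ S k)).
    { rewrite E, profS, <- E, ev2, IH2. simpl. unfold best_response.
      f_equal; field. }
    split; [exact H1|].
    rewrite profS, ev2S, H1. simpl. unfold best_response. f_equal; field.
Qed.

Lemma u1_closed x a n :
  u1 x a n = - a^2/4 * (/4)^n + 3 * a^2 / 4 * (-/4)^n.
Proof.
  assert (P1 : forall k, (/4)^(2*k) = (/4)^k * (/4)^k).
  { intro k. rewrite pow_mult. rewrite <- Rpow_mult_distr. f_equal. field. }
  assert (P2 : forall k, (-/4)^(2*k) = (/4)^k * (/4)^k).
  { intro k. rewrite pow_mult. rewrite <- Rpow_mult_distr. f_equal. field. }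
  destruct (Nat.Even_or_Odd n) as [[k Hk]|[k Hk]]; subst n.
  - unfold u1. rewrite (proj1 (prof_closed x a k)). cbn [fst snd]. unfold u.
    rewrite P1, P2. field.
  - replace (2*k+1)%nat with (S (2*k)) by lia.
    unfold u1. rewrite (proj2 (prof_closed x a k)). cbn [fst snd].
    rewrite <- !tech_pow_Rmult, P1, P2. unfold u. field.
Qed.

Lemma geom_scal (c q : R) : Rabs q < 1 ->
  is_series (fun n => c * q ^ n) (c * / (1 - q)).
Proof.
  intro Hq. apply (is_series_scal_l (K:=R_AbsRing) (V:=R_NormedModule)).
  now apply is_series_geom.
Qed.

Lemma plus_R (a b : nat -> R) la lb : is_series a la -> is_series b lb ->
  is_series (fun n => a n + b n) (la + lb).
Proof. intros A B. exact (is_series_plus (V:=R_NormedModule) _ _ _ _ A B). Qed.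

Theorem theorem4 (x_init a0 : R)
  (hx : -1 <= x_init <= 1) (ha : -1 <= a0 <= 1) :
  0 <= gain a0 /\
  is_series (u1 x_init a0) (8 * gain a0 / 15) /\
  (a0 <> 0 -> 0 < 8 * gain a0 / 15).
Proof.
  assert (G : gain a0 = a0^2/2).
  { unfold gain, u, best_response. field. }
  rewrite G. split; [|split].
  - pose proof (pow2_ge_0 a0). lra.
  - eapply is_series_ext. { intro n. symmetry. apply u1_closed. }
    replace (8 * (a0^2/2) / 15) with
      ((- a0^2/4) * (/(1 - /4)) + (3 * a0^2/4) * (/(1 - -/4))) by field.
    apply plus_R; apply geom_scal.
    + rewrite Rabs_pos_eq; lra.
    + rewrite Rabs_Ropp, Rabs_pos_eq; lra.
  - intro H. assert (0 < a0^2) by (simpl; rewrite Rmult_1_r; apply Rsqr_pos_lt; auto). lra.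
Qed.
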